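(* Let $\mathcal{A}$ be a parity game arena and $\mathcal{A}_\bot$ its escape arena. For $i\in\{0,1\}$ and every vertex $s\in V$, player $i$ wins $s$ in the parity game on $\mathcal{A}$ if and only if player $i$ wins $s$ in $\mathcal{A}_\bot$.
   Context: Parity game arena: $\mathcal{A}=(V,E,o,c)$ with $V$ finite, $E\subseteq V\times V$, every vertex has a successor, owner map $o:V\to\{0,1\}$, colouring $c:V\to\{0,\dots,d-1\}$; $V_i=o^{-1}(i)$. A (memoryless) strategy of player $i$ is a set $\sigma$ of edges leaving $V_i$ with at least one edge out of each vertex of $V_i$ that has a successor; $\mathcal{A}|_\sigma$ keeps all edges of the other player and only the edges in $\sigma$ for player $i$. In the parity game on $\mathcal{A}$ plays are infinite paths, an infinite play is won by player $0$ iff the largest colour occurring infinitely often is even, and player $i$ wins $s$ if he has a strategy $\sigma$ such that he wins every play from $s$ in $\mathcal{A}|_\sigma$. Escape arena $\mathcal{A}_\bot$: vertices $V\cup\{\bot\}$, edges $E\cup(V_0\times\{\bot\})$, $\bot$ owned by player $0$ with no outgoing edges; plays are maximal paths (infinite or ending in $\bot$). Colour profiles $\mathcal{P}=\mathbb{Z}^d\cup\{-\infty,\infty\}$: a finite play $\pi$ ending in $\bot$ has value $\wp(\pi)\in\mathbb{Z}^d$ whose $k$-th coordinate counts the vertices of $V$ on $\pi$ with colour $k$; an infinite play has value $\infty$ if won by player $0$ under the parity condition and $-\infty$ otherwise. Total order $\prec$: $-\infty$ least, $\infty$ greatest; for distinct $p,p'\in\mathbb{Z}^d$ with $k$ the largest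 index where they differ, $p\prec p'$ iff ($k$ even and $p_k<p'_k$) or ($k$ odd and $p_k>p'_k$). Let $\overline{\wp}$ be the $\prec$-maximal value of an acyclic path in $\mathcal{A}_\bot$ ending in $\bot$ (taken to be $-\infty$ if there is none). In $\mathcal{A}_\bot$, player $0$ wins a play $\pi$ iff $\wp(\pi)\succ\overline{\wp}$, otherwise player $1$ wins it; player $i$ wins a vertex $s$ in $\mathcal{A}_\bot$ if he has a strategy $\sigma$ in $\mathcal{A}_\bot$ such that he wins every play from $s$ in $\mathcal{A}_\bot|_\sigma$. *)

(* Defs.v *)
From mathcomp Require Import all_boot all_order all_algebra.
From Stdlib Require Import ClassicalEpsilon.
Set Implicit Arguments. Unset Strict Implicit. Unset Printing Implicit Defensive.
Import Order.TTheory GRing.Theory Num.Theory.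

(* Players are 'I_2 (player 0 = ord0, player 1 = the other one). *)

Section Arena.
Variable T : finType.

(* sigma is a (memoryless) strategy of player i: a set of edges leaving
   vertices of player i, with at least one edge out of each vertex of
   player i that has a successor. *)
Definition is_strategy (R : rel T) (own : T -> 'I_2) (i : 'I_2)
    (sigma : rel T) : Prop :=
  (forall u w, sigma u w -> R u w /\ own u = i) /\
  (forall u, own u = i -> (exists w, R u w) -> exists w, sigma u w).

Definition restrict (R : rel T) (own : T -> 'I_2) (i : 'I_2)
    (sigma : rel T) : rel T :=
  fun u w => if own u == i then sigma u w else R u w.

Definition inf_path (R : rel T) (s : T) (p : nat -> T) : Prop :=
  p 0 = s /\ forall n, R (p n) (p n.+1).
End Arena.

Definition inf_often (f : nat -> nat) (k : nat) : Prop :=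
  forall N, exists n, N <= n /\ f n = k.

Definition parity_win0 (f : nat -> nat) : Prop :=
  exists k, [/\ inf_often f k, ~~ odd k & forall k', inf_often f k' -> k' <= k].

Definition parity_wins_play (i : 'I_2) (f : nat -> nat) : Prop :=
  if val i == 0 then parity_win0 f else ~ parity_win0 f.

Definition wins_parity (V : finType) (E : rel V) (o : V -> 'I_2) (d : nat)
    (c : V -> 'I_d) (i : 'I_2) (s : V) : Prop :=
  exists sigma : rel V, is_strategy E o i sigma /\
    forall p, inf_path (restrict E o i sigma) s p ->
      parity_wins_play i (fun n => val (c (p n))).

Inductive profile (d : nat) : Type :=
  | NegInf
  | Fin of {ffun 'I_d -> int}
  | PosInf.
Arguments NegInf {d}.
Arguments PosInf {d}.

Definition prof_lt (d : nat) (P Q : profile d) : Prop :=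
  match P, Q with
  | NegInf, NegInf => False
  | NegInf, _ => True
  | PosInf, _ => False
  | Fin _, NegInf => False
  | Fin _, PosInf => True
  | Fin p, Fin q =>
      exists k : 'I_d, [/\ p k != q k,
        (forall j : 'I_d, (k < j)%N -> p j = q j) &
        ((~~ odd k /\ (p k < q k)%R) \/ (odd k /\ (q k < p k)%R))]
  end.

Definition prof_le (d : nat) (P Q : profile d) : Prop := prof_lt P Q \/ P = Q.

(** The escape arena: vertices option V, None = bottom. *)
Section Escape.
Variables (V : finType) (E : rel V) (o : V -> 'I_2) (d : nat) (c : V -> 'I_d).

Definition escE : rel (option V) :=
  fun u w => match u, w with
             | Some u', Some w' => E u' w'
             | Some u', None => val (o u') == 0
             | None, _ => false
             end.

Definition esco (u : option V) : 'I_2 :=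
  if u is Some u' then o u' else ord0.

(* colour of a vertex of the escape arena (bot never occurs on infinite plays) *)
Definition escc (u : option V) : nat := if u is Some u' then val (c u') else 0.

Definition fin_value (q : seq (option V)) : profile d :=
  Fin [ffun k : 'I_d =>
         Posz (count (fun x => if x is Some v then c v == k else false) q)].

Definition inf_value (p : nat -> option V) : profile d :=
  if excluded_middle_informative (parity_win0 (fun n => escc (p n))) then PosInf else NegInf.

(* acyclic path in the escape arena, starting at v in V, ending in bot:
   the vertex sequence is v :: q *)
Definition acyclic_bot_path (v : V) (q : seq (option V)) : Prop :=
  [/\ path escE (Some v) q, last (Some v) q = None & uniq (Some v :: q)].

Definition is_max_acyclic (P : profile d) : Prop :=
  ((forall v q, ~ acyclic_bot_path v q) /\ P = NegInf) \/
  ((exists v q, acyclic_bot_path v q /\ P = fin_value (Some v :: q)) /\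
   (forall v q, acyclic_bot_path v q -> prof_le (fin_value (Some v :: q)) P)).

Definition max_acyclic_value : profile d :=
  epsilon (inhabits NegInf) is_max_acyclic.

Definition escape_wins_play (i : 'I_2) (x : profile d) : Prop :=
  if val i == 0 then prof_lt max_acyclic_value x
  else ~ prof_lt max_acyclic_value x.

Definition wins_escape (i : 'I_2) (s : V) : Prop :=
  exists sigma : rel (option V), is_strategy escE esco i sigma /\
    (forall p, inf_path (restrict escE esco i sigma) (Some s) p ->
        escape_wins_play i (inf_value p)) /\
    (forall q, path (restrict escE esco i sigma) (Some s) q ->
        last (Some s) q = None ->
        escape_wins_play i (fin_value (Some s :: q))).
End Escape.

(* Main.v *)
Require Import Defs.
From mathcomp Require Import all_boot all_order all_algebra.
From Stdlib Require Import ClassicalEpsilon.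
From mathcomp Require Import zify.
Set Implicit Arguments. Unset Strict Implicit. Unset Printing Implicit Defensive.
Import Order.TTheory GRing.Theory Num.Theory.

Lemma prof_lt_asym d (P Q : profile d) : prof_lt P Q -> prof_lt Q P -> False.
Proof.
case: P => [|p|]; case: Q => [|q|] //=.
move=> [k1 [n1 e1 s1]] [k2 [n2 e2 s2]].
have [lt12|lt21|eq12] := ltngtP k1 k2.
- by rewrite (e1 _ lt12) eqxx in n2.
- by rewrite (e2 _ lt21) eqxx in n1.
- have ek : k1 = k2 by apply: val_inj.
  subst k2.
  case: s1 => [[od l1]|[od l1]]; case: s2 => [[od2 l2]|[od2 l2]];
    try by case: (odd k1) od od2.
  + by have := lt_trans l1 l2; rewrite ltxx.
  + by have := lt_trans l1 l2; rewrite ltxx.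
Qed.

Lemma prof_le_lt_false d (P Q : profile d) : prof_le P Q -> prof_lt Q P -> False.
Proof.
move=> hle hlt; case: hle => [hle|heq]; first exact: prof_lt_asym hle hlt.
by subst P; exact (prof_lt_asym hlt hlt).
Qed.

Lemma prof_lt_trans d (P Q R : profile d) :
  prof_lt P Q -> prof_lt Q R -> prof_lt P R.
Proof.
case: P => [|p|]; case: Q => [|q|]; case: R => [|r|] //=.
move=> [k1 [n1 e1 s1]] [k2 [n2 e2 s2]].
have [lt12|lt21|eq12] := ltngtP k1 k2.
- exists k2; split.
  + by rewrite (e1 _ lt12).
  + by move=> j hj; rewrite (e1 _ (ltn_trans lt12 hj)) e2.
  + by rewrite (e1 _ lt12).
- exists k1; split.
  + by rewrite -(e2 _ lt21).
  + by move=> j hj; rewrite e1 // e2 //; exact: ltn_trans lt21 hj.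
  + by rewrite -(e2 _ lt21).
- have ek : k1 = k2 by apply: val_inj.
  subst k2.
  have s3 : (~~ odd k1 /\ (p k1 < r k1)%R) \/ (odd k1 /\ (r k1 < p k1)%R).
    case: s1 => [[od l1]|[od l1]]; case: s2 => [[od2 l2]|[od2 l2]];
      try by case: (odd k1) od od2.
    + by left; split => //; exact: lt_trans l1 l2.
    + by right; split => //; exact: lt_trans l2 l1.
  exists k1; split => //.
  + by case: s3 => [[_ l]|[_ l]]; rewrite neq_lt l ?orbT.
  + by move=> j hj; rewrite e1 // e2.
Qed.

Lemma prof_lt_le d (P Q R : profile d) :
  prof_lt P Q -> prof_le Q R -> prof_le P R.
Proof. by move=> h [h2|<-]; left => //; exact: prof_lt_trans h h2. Qed.

Lemma prof_le_trans d (P Q R : profile d) :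
  prof_le P Q -> prof_le Q R -> prof_le P R.
Proof. by case=> [h|->] //; exact: prof_lt_le. Qed.

Lemma prof_total d (p q : {ffun 'I_d -> int}) :
  p = q \/ prof_lt (Fin p) (Fin q) \/ prof_lt (Fin q) (Fin p).
Proof.
case: (boolP [exists k, p k != q k]) => [/existsP [k0 hk0]| hn]; last first.
  left; apply/ffunP => k; apply/eqP; move: hn; rewrite negb_exists.
  by move=> /forallP /(_ k); rewrite negbK.
have [k hk kmax] := @arg_maxnP _ k0 (fun k => p k != q k) (fun k => val k) hk0.
have he : forall j : 'I_d, (k < j)%N -> p j = q j.
  move=> j hj; apply/eqP; case: (boolP (p j != q j)) => [/kmax|/negPn//].
  by move=> hh; have hh2 : (j <= k)%N := hh; rewrite ltnNge hh2 in hj.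
right; have [l|l|e] := ltgtP (p k) (q k); last by rewrite e eqxx in hk.
- case: (boolP (odd k)) => od.
  + by right; exists k; split => //; [rewrite eq_sym | move=> j /he ->|right].
  + by left; exists k; split => //; left.
- case: (boolP (odd k)) => od.
  + by left; exists k; split => //; right.
  + by right; exists k; split => //; [rewrite eq_sym | move=> j /he ->|left].
Qed.

Lemma seq_max d (X : eqType) (f : X -> {ffun 'I_d -> int}) (l : seq X) :
  l != [::] -> exists2 x, x \in l & forall y, y \in l -> prof_le (Fin (f y)) (Fin (f x)).
Proof.
elim: l => [//|x l IH] _.
case: (altP (l =P [::])) => [->|hl].
  by exists x; rewrite ?mem_seq1 // => y; rewrite mem_seq1 => /eqP ->; right.
have [m mi mmax] := IH hl.
have [e|[lt|lt]] := prof_total (f x) (f m).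
- exists m; first by rewrite in_cons mi orbT.
  by move=> y; rewrite in_cons => /orP[/eqP->|/mmax//]; rewrite e; right.
- exists m; first by rewrite in_cons mi orbT.
  by move=> y; rewrite in_cons => /orP[/eqP->|/mmax//]; left.
- exists x; first by rewrite in_cons eqxx.
  move=> y; rewrite in_cons => /orP[/eqP->|/mmax h]; first by right.
  exact: prof_le_trans h (or_introl lt).
Qed.

Fixpoint allseq (T : finType) (n : nat) : seq (seq T) :=
  if n is n'.+1 then [::] :: [seq x :: s | x <- enum T, s <- allseq T n']
  else [:: [::]].

Lemma allseqP (T : finType) n (s : seq T) : size s <= n -> s \in allseq T n.
Proof.
elim: n s => [|n IH] [|x s] //=.
- move=> hs; rewrite in_cons; apply/orP; right; apply/allpairsP.
  by exists (x, s); split => //=; [rewrite mem_enum | exact: IH].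
Qed.

Lemma notuniq_split (T : eqType) (l : seq T) :
  ~~ uniq l -> exists a x b c, l = a ++ x :: b ++ x :: c.
Proof.
elim: l => [//|y l IH] /=; rewrite negb_and negbK => /orP [hy|hu].
- case/splitPr: hy => b c. by exists [::], y, b, c.
- have [a [x [b [c ->]]]] := IH hu. by exists (y :: a), x, b, c.
Qed.

Lemma sorted_cat_cons (T : Type) (e : rel T) (a : seq T) x c :
  sorted e (a ++ x :: c) = sorted e (rcons a x) && path e x c.
Proof.
case: a => [|y a] //=; rewrite cat_path rcons_path /=.
by rewrite andbA.
Qed.

Lemma sorted_catl (T : Type) (e : rel T) (l1 l2 : seq T) :
  sorted e (l1 ++ l2) -> sorted e l1.
Proof. by case: l1 => //= h t; rewrite cat_path => /andP[]. Qed.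

Fixpoint lidx (m t n : nat) : nat :=
  if n is n'.+1 then (if (lidx m t n').+1 < m then (lidx m t n').+1 else t.+1)
  else 0.

Lemma lidx_small m t n : n < m -> lidx m t n = n.
Proof.
elim: n => [//|n IH] hn /=; rewrite IH ?hn //; exact: ltnW.
Qed.

Lemma lidx_lt m t n : t.+1 < m -> lidx m t n < m.
Proof.
move=> ht; elim: n => [|n IH] /=; first exact: leq_ltn_trans ht.
by case: ifP.
Qed.

Lemma lidx_range m t n : t.+1 < m -> t < n -> t < lidx m t n.
Proof.
move=> ht; elim: n => [//|n IH] hn.
case: (ltngtP t n) => [h|h|<-].
- by rewrite /=; case: ifP => // _; exact: ltnW (IH h).
- by move: hn; rewrite ltnS leqNgt h.
- by rewrite lidx_small.
Qed.

Lemma lidx_add m t n k : lidx m t n + k < m -> lidx m t (n + k) = lidx m t n + k.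
Proof.
elim: k => [|k IH]; first by rewrite !addn0.
move=> h; rewrite addnS /= IH; last lia.
by rewrite -addnS h.
Qed.

Lemma lidx_visit m t j N : t.+1 < m -> t < j < m ->
  exists n, N <= n /\ lidx m t n = j.
Proof.
move=> ht /andP [hj1 hj2].
set n0 := N + t.+1.
have hr : t < lidx m t n0 by apply: lidx_range => //; rewrite /n0; lia.
have hl : lidx m t n0 < m by exact: lidx_lt.
case: (leqP (lidx m t n0) j) => hij.
- exists (n0 + (j - lidx m t n0)); split; first by rewrite /n0; lia.
  by rewrite lidx_add; lia.
- set n1 := n0 + (m.-1 - lidx m t n0).
  have e1 : lidx m t n1 = m.-1 by rewrite lidx_add; lia.
  have e2 : lidx m t n1.+1 = t.+1 by rewrite /= e1; case: ifP => //; lia.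
  exists (n1.+1 + (j - t.+1)); split; first by rewrite /n1 /n0; lia.
  by rewrite lidx_add e2; lia.
Qed.

Lemma lidx_edge (T : Type) (x0 : T) (e : rel T) (L : seq T) t n :
  t.+1 < size L -> nth x0 L t = last x0 L -> sorted e L ->
  e (nth x0 L (lidx (size L) t n)) (nth x0 L (lidx (size L) t n.+1)).
Proof.
move=> ht hl hs /=.
have hlt := lidx_lt n ht.
case: ifP => h; first exact: (sortedP x0 hs).
have -> : lidx (size L) t n = (size L).-1 by lia.
rewrite nth_last -hl; exact: (sortedP x0 hs).
Qed.

Lemma max_attained (X : eqType) (g : X -> nat) (l : seq X) :
  l != [::] -> exists2 y, y \in l & \max_(z <- l) g z = g y.
Proof.
elim: l => [//|x l IH] _; rewrite big_cons.
case: (altP (l =P [::])) => [->|hl].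
  by exists x; rewrite ?mem_seq1 // big_nil maxn0.
have [y yi ye] := IH hl; rewrite ye.
case: (leqP (g y) (g x)) => h.
- by exists x; rewrite ?in_cons ?eqxx.
- by exists y; rewrite ?in_cons ?yi ?orbT.
Qed.

Lemma head_cc (T : Type) (z : T) a x (u w : seq T) :
  head z (a ++ x :: u) = head z (a ++ x :: w).
Proof. by case: a. Qed.

Lemma last_cc (T : Type) (z : T) a x (u : seq T) :
  last z (a ++ x :: u) = last x u.
Proof. by rewrite last_cat. Qed.

Lemma drop_cc (T : Type) (a : seq T) x u : drop (size a).+1 (a ++ x :: u) = u.
Proof. by elim: a => [|y a IH] /=; [rewrite drop0|]. Qed.

Section Main.
Variables (V : finType) (E : rel V) (o : V -> 'I_2) (d : nat) (c : V -> 'I_d).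
Hypothesis Htot : forall v : V, exists w, E v w.

Local Notation G0 := (escE E o).
Local Notation M := (max_acyclic_value E o c).
Local Notation col k := (fun x : option V => if x is Some v then c v == k else false).

Definition acb (vq : V * seq (option V)) : bool :=
  [&& path (escE E o) (Some vq.1) vq.2, last (Some vq.1) vq.2 == None
    & uniq (Some vq.1 :: vq.2)].

Definition fvf (l : seq (option V)) : {ffun 'I_d -> int} :=
  [ffun k => Posz (count (col k) l)].

Lemma max_exists : exists P, is_max_acyclic E o c P.
Proof.
set cand := [seq (v, q) | v <- enum V, q <- allseq (option V) #|{: option V}|].
have hc : forall v q, acyclic_bot_path E o v q -> (v, q) \in filter acb cand.
  move=> v q [h1 h2 h3]; rewrite mem_filter; apply/andP; split.
    by apply/and3P; split => //; apply/eqP.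
  apply/allpairsP; exists (v, q); split => //=; first by rewrite mem_enum.
  apply: allseqP.
  have h4 : #|(Some v :: q)| <= #|{: option V}| := max_card _.
  rewrite (card_uniqP h3) /= in h4; exact: ltnW.
case: (altP (filter acb cand =P [::])) => hnil.
  by exists NegInf; left; split => // v q h; have := hc v q h; rewrite hnil.
have [[v q] hin hmax] := seq_max (fun vq => fvf (Some vq.1 :: vq.2)) hnil.
exists (fin_value c (Some v :: q)); right; split.
  exists v, q; split => //.
  move: hin; rewrite mem_filter /acb /= => /andP [/and3P [h1 /eqP h2 h3] _].
  by split.
by move=> v' q' h; exact: hmax _ (hc _ _ h).
Qed.

Lemma HM : is_max_acyclic E o c M.
Proof. exact: epsilon_spec max_exists. Qed.

Lemma M_lt_Pos : prof_lt M PosInf.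
Proof. by case: HM => [[_ ->]|[[v [q [_ ->]]] _]]. Qed.

Lemma restrict_sub i (σ : rel (option V)) :
  is_strategy G0 (esco o) i σ -> subrel (restrict G0 (esco o) i σ) G0.
Proof.
by move=> [h1 _] u w; rewrite /restrict; case: ifP => // _ /h1 [].
Qed.

Definition lift (σ : rel V) : rel (option V) := fun u w =>
  match u, w with Some u', Some w' => σ u' w' | _, _ => false end.

Lemma lift_strat i σ : is_strategy E o i σ -> is_strategy G0 (esco o) i (lift σ).
Proof.
move=> [h1 h2]; split.
  by move=> [u|] [w|] //= /h1.
move=> [u|] hu [w hw]; last by case: w hw.
have [w' hw'] := h2 u hu (Htot u).
by exists (Some w').
Qed.

Lemma proj (G : rel (option V)) (R : rel V) s p :
  (forall u w, G (Some u) (Some w) -> R u w) -> (forall w, G None w = false) ->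
  inf_path G (Some s) p -> exists p', inf_path R s p' /\ forall n, p n = Some (p' n).
Proof.
move=> hGR hN [h0 hp].
have hs : forall n, p n = Some (odflt s (p n)).
  by move=> n; case e: (p n) => [v|] //; have := hp n; rewrite e hN.
exists (fun n => odflt s (p n)); split; last exact: hs.
split; first by rewrite h0.
by move=> n; apply: hGR; rewrite -!hs.
Qed.

Lemma pw0_ext f g : (forall n, f n = g n) -> parity_win0 f -> parity_win0 g.
Proof.
move=> hfg [k [h1 h2 h3]]; exists k; split => //.
- by move=> N; have [n [hn e]] := h1 N; exists n; rewrite -hfg.
- move=> k' hk'; apply: h3 => N; have [n [hn e]] := hk' N; exists n; by rewrite hfg.
Qed.

Lemma path_to_none (G : rel (option V)) x q :
  path G x q -> last x q = None -> x != None -> exists u, G u None.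
Proof.
case/lastP: q => [|q y] /=; first by move=> _ ->; rewrite eqxx.
by rewrite rcons_path last_rcons => /andP [_ h] hy _; exists (last x q); rewrite -hy.
Qed.

Lemma fin_value_lt (L L' cyc : seq (option V)) (j0 : 'I_d) :
  (forall k, count (col k) L = count (col k) L' + count (col k) cyc) ->
  odd j0 -> 0 < count (col j0) cyc ->
  (forall j : 'I_d, (j0 < j)%N -> count (col j) cyc = 0) ->
  prof_lt (fin_value c L) (fin_value c L').
Proof.
move=> hk hod hpos hz; exists j0; split; rewrite ?ffunE.
- by rewrite hk; apply/negP => /eqP [] h; lia.
- by move=> j hj; rewrite ?ffunE hk hz // addn0.
- by right; split => //; rewrite hk ltz_nat; lia.
Qed.


Lemma esc_fin_lose i s τ :
  is_strategy E o i τ -> val i != 0 ->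
  (forall p, inf_path (restrict E o i τ) s p ->
     parity_wins_play i (fun n => val (c (p n)))) ->
  forall n L, size L < n -> sorted (restrict G0 (esco o) i (lift τ)) L ->
    head None L = Some s -> last None L = None -> prof_le (fin_value c L) M.
Proof.
move=> hτ hi hw.
set G := restrict G0 (esco o) i (lift τ).
have hN : forall w, G None w = false by move=> w; rewrite /G /restrict; case: ifP.
have hsub : subrel G G0 := restrict_sub (lift_strat hτ).
have hlose : forall p, inf_path G (Some s) p -> ~ parity_win0 (fun n => escc c (p n)).
  move=> p hp h.
  have [p' [hp' hpp]] := proj (R := restrict E o i τ) (fun u w h => h) hN hp.
  have := hw p' hp'; rewrite /parity_wins_play (negbTE hi); apply.
  by apply: pw0_ext h => n; rewrite hpp.
elim=> [//|n IH] L hn hs hh hl.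
case: (boolP (uniq L)) => hu.
  case: L hn hs hh hl hu => [//|y q] _ hs /= hy hl hu; subst y.
  have hac : acyclic_bot_path E o s q by split => //; exact: sub_path hsub _ _ hs.
  by case: HM => [[hno _]|[_ hall]]; [case: (hno _ _ hac) | exact: hall _ _ hac].
have [a [x [b [c0 eL]]]] := notuniq_split hu.
pose L' := a ++ x :: c0.
pose Lc := a ++ x :: b ++ [:: x].
pose cyc := b ++ [:: x].
have hs' : sorted G L'.
  move: hs; rewrite eL /L' !sorted_cat_cons => /andP [-> /=].
  by rewrite cat_path /= => /andP [_ /andP [_ ->]].
have hh' : head None L' = Some s by rewrite -hh eL /L' (head_cc _ _ _ _ (b ++ x :: c0)).
have hl' : last None L' = None by rewrite /L' last_cc -hl eL last_cc last_cat.
have hsz : size L' < n by move: hn; rewrite eL /L' !size_cat /= size_cat /=; lia.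
apply: prof_lt_le (IH L' hsz hs' hh' hl').
have hsc : sorted G Lc.
  apply: (@sorted_catl _ _ _ c0); rewrite /Lc -catA /= -catA /=.
  by rewrite -eL.
pose t := size a.
have ht : t.+1 < size Lc by rewrite /Lc /t size_cat /= size_cat /=; lia.
have hnt : nth None Lc t = last None Lc.
  by rewrite /Lc /t nth_cat ltnn subnn /= last_cc last_cat.
pose p n := nth None Lc (lidx (size Lc) t n).
have hp : inf_path G (Some s) p.
  split; last by move=> m; exact: lidx_edge.
  by rewrite /p /= nth0 -hh eL /Lc (head_cc _ _ _ _ (b ++ x :: c0)).
have hnp := hlose p hp.
have hdrop : drop t.+1 Lc = cyc by rewrite /Lc /t drop_cc.
have hcyc_nth : forall j, t < j < size Lc -> nth None Lc j \in cyc.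
  move=> j /andP [hj1 hj2]; rewrite -hdrop.
  have -> : nth None Lc j = nth None (drop t.+1 Lc) (j - t.+1) by rewrite nth_drop subnKC.
  by apply: mem_nth; rewrite size_drop; move: (size Lc) hj2 => SL hj2; lia.
pose k := \max_(z <- cyc) escc c z.
have hne : cyc != [::] by rewrite /cyc -size_eq0 size_cat addn1.
have [y0 hy0 hk] := @max_attained _ (escc c) cyc hne.
have hodd : odd k.
  case: (boolP (odd k)) => // hev; exfalso; apply: hnp; exists k; split => //.
  - move=> N.
    have hj0 : index y0 cyc < size cyc by rewrite index_mem.
    have hsc2 : size Lc = t.+1 + size cyc by rewrite -hdrop size_drop; lia.
    have hjj : t < t.+1 + index y0 cyc < size Lc.
      by apply/andP; split; move: (size Lc) hsc2 => SL hsc2; lia.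
    have [m [hm e]] := @lidx_visit (size Lc) t (t.+1 + index y0 cyc) N ht hjj.
    by exists m; split => //; rewrite /p e -nth_drop hdrop nth_index.
  - move=> k' hk'; have [m [hm e]] := hk' t.+1; rewrite -e.
    apply: leq_bigmax_seq => //; apply: hcyc_nth.
    by rewrite lidx_range ?lidx_lt.
case: y0 hy0 hk => [v|] hy0 hk; last by move: hodd; rewrite /k hk.
apply: (fin_value_lt (cyc := cyc) (j0 := c v)).
- by move=> kk; rewrite eL /L' /cyc !count_cat /= count_cat /=; lia.
- by move: hodd; rewrite /k hk.
- by rewrite -has_count; apply/hasP; exists (Some v) => //=.
- move=> j hj; apply/eqP; rewrite -leqn0 leqNgt -has_count; apply/hasP => [[z hz]].
  case: z hz => [w|] hz //= /eqP hcw.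
  have : escc c (Some w) <= k by apply: leq_bigmax_seq.
  rewrite /k hk /= hcw.
  by move: hj; rewrite /=; lia.
Qed.

Lemma not_lt_Neg (P : profile d) : ~ prof_lt P NegInf.
Proof. by case: P => [|p|] /= []. Qed.

Lemma val_i01 (i : 'I_2) : val i = 0 \/ val i = 1.
Proof. by case: i => [[|[|]]] //=; auto. Qed.

Lemma par_to_esc i s : wins_parity E o c i s -> wins_escape E o c i s.
Proof.
move=> [σ [hσ hw]].
have hi := val_i01 i.
exists (lift σ); split; first exact: lift_strat.
have hN : forall w, restrict G0 (esco o) i (lift σ) None w = false.
  by move=> w; rewrite /restrict; case: ifP.
split.
- move=> p hp.
  have [p' [hp' hpp]] := proj (R := restrict E o i σ) (fun u w h => h) hN hp.
  have := hw p' hp'; rewrite /parity_wins_play /escape_wins_play.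
  have he : forall n, val (c (p' n)) = escc c (p n) by move=> n; rewrite hpp.
  case: hi => -> /=.
  + move=> h; rewrite /inf_value; case: excluded_middle_informative => h2.
      exact: M_lt_Pos.
    by exfalso; apply: h2; exact: pw0_ext h.
  + move=> h; rewrite /inf_value; case: excluded_middle_informative => h2.
      by exfalso; apply: h; exact: pw0_ext (fun n => esym (he n)) h2.
    exact: not_lt_Neg.
- move=> q hq hl.
  case: hi => hi.
  + exfalso; have [u hu] := path_to_none hq hl isT.
    case: u hu => [u|]; last by rewrite hN.
    rewrite /restrict /=; case: ifP => // hne /eqP h.
    move/negbT: hne => /eqP; apply; apply: val_inj; exact: (etrans h (esym hi)).
  + rewrite /escape_wins_play hi /= => hlt.
    have hi' : val i != 0 by rewrite hi.
    have := @esc_fin_lose i s σ hσ hi' hw (size (Some s :: q)).+1 (Some s :: q)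
      (ltnSn _) hq erefl hl.
    by move=> hle; exact: prof_le_lt_false hle hlt.
Qed.

Lemma esc_to_par i s : wins_escape E o c i s -> wins_parity E o c i s.
Proof.
move=> [σ' [hσ [hinf hfin]]].
set G := restrict G0 (esco o) i σ'.
have hsub : subrel G G0 := restrict_sub hσ.
case: (val_i01 i) => hi.
- have hnone : forall q, path G (Some s) q -> last (Some s) q <> None.
    move=> q hq; case: (shortenP hq) => q' hq' hu _ hl.
    have hac : acyclic_bot_path E o s q' by split => //; exact: sub_path hsub _ _ hq'.
    have := hfin q' hq' hl; rewrite /escape_wins_play hi /= => hlt.
    case: HM => [[hno _]|[_ hall]]; first by case: (hno _ _ hac).
    exact: prof_le_lt_false (hall _ _ hac) hlt.
  pose σ u w := (o u == i) &&
    (if [exists w', σ' (Some u) (Some w')] then σ' (Some u) (Some w) else E u w).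
  have hreach : forall u q, path G (Some s) q -> last (Some s) q = Some u ->
      o u = i -> [exists w', σ' (Some u) (Some w')].
    move=> u q hq hl hu.
    have [z hz] : exists z, σ' (Some u) z.
      apply: hσ.2 => //; exists None; rewrite /= hu hi //.
    case: z hz => [w|] hz; first by apply/existsP; exists w.
    exfalso; apply: (hnone (rcons q None)); last by rewrite last_rcons.
    by rewrite rcons_path hq hl /G /restrict /= hu eqxx.
  have hedge : forall u w q, path G (Some s) q -> last (Some s) q = Some u ->
      restrict E o i σ u w -> G (Some u) (Some w).
    move=> u w q hq hl; rewrite /G /restrict /=; case: ifP => [/eqP hu|_] //.
    by rewrite /σ hu eqxx (hreach _ _ hq hl hu) /= => h'.
  exists σ; split.
  + split.
    * move=> u w /andP [/eqP hu]; case: ifP => _ h; split => //.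
      by have [] := hσ.1 _ _ h.
    * move=> u hu [w hw].
      case: (boolP [exists w', σ' (Some u) (Some w')]) => [hex | hne].
        have [w' hw'] := existsP hex.
        by exists w'; rewrite /σ hu eqxx hex.
      by exists w; rewrite /σ hu eqxx (negbTE hne).
  + move=> p [hp0 hp].
    have hr : forall n, exists q, path G (Some s) q /\ last (Some s) q = Some (p n).
      elim=> [|n [q [hq hl]]]; first by exists [::]; rewrite hp0.
      exists (rcons q (Some (p n.+1))); rewrite rcons_path last_rcons hq hl; split => //=.
      exact: hedge hq hl (hp n).
    have hpG : inf_path G (Some s) (fun n => Some (p n)).
      split; first by rewrite hp0.
      by move=> n; have [q [hq hl]] := hr n; exact: hedge hq hl (hp n).
    have := hinf _ hpG; rewrite /escape_wins_play /parity_wins_play hi /= /inf_value.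
    case: excluded_middle_informative => h; first by move=> _; exact: h.
    by rewrite /= => /not_lt_Neg.
- pose τ u w := σ' (Some u) (Some w).
  exists τ; split.
  + split.
    * by move=> u w h; have [h1 h2] := hσ.1 _ _ h; split.
    * move=> u hu _; have [w0 hw0] := Htot u.
      have [z hz] := hσ.2 (Some u) hu (ex_intro _ (Some w0) hw0).
      case: z hz => [w|] hz; first by exists w.
      have [h1 _] := hσ.1 _ _ hz.
      by move: h1; rewrite /= hu hi.
  + move=> p [hp0 hp].
    have hpG : inf_path G (Some s) (fun n => Some (p n)).
      by split; [rewrite hp0 | exact: hp].
    have := hinf _ hpG; rewrite /escape_wins_play /parity_wins_play hi /= /inf_value.
    case: excluded_middle_informative => h.
      by move=> hh; exfalso; exact: hh M_lt_Pos.
    by move=> _; exact: h.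
Qed.

End Main.

Theorem mainTheorem4 (V : finType) (E : rel V) (o : V -> 'I_2) (d : nat)
    (c : V -> 'I_d) (Htot : forall v : V, exists w, E v w)
    (i : 'I_2) (s : V) :
  wins_parity E o c i s <-> wins_escape E o c i s.
Proof.
split; [exact: (@par_to_esc V E o d c Htot) | exact: (@esc_to_par V E o d c Htot)].
Qed.
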